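(* Assume $\ell(y,x,\theta)\ge0$ for all $\theta$ and $\nu$-a.e. $(x,y)$, $L(\theta)<\infty$ for all $\theta$, and let $\pi$ be a prior on $\Theta$. Suppose $\lambda^\star>0$ is a local (or global) minimizer of $\lambda\mapsto\mathrm{EB}_0(\pi_J^\lambda,\lambda)$ on $(0,\infty)$, that this function is differentiable at $\lambda^\star$, and that its derivative may be computed by differentiating under the expectations $\mathbb{E}_{D\sim\nu^n}$, $\mathbb{E}_\pi$ and $\mathbb{E}_\nu$ (with all quantities below finite). Then, with $\rho^\star=\rho^\star_{\lambda^\star}$, $$\mathbb{E}_{D\sim\nu^n}\big[\mathcal{B}(\rho^\star(\cdot\mid D),\lambda^\star)\big]=\frac{1}{n}\mathbb{E}_{D\sim\nu^n}\big[\mathrm{KL}(\rho^\star(\cdot\mid D)\,\|\,\pi)\big].$$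
   Context: Let $\nu$ be a probability distribution on pairs $(x,y)$, $\Theta$ a parameter space, and for each $\theta\in\Theta$ let $p(y\mid x,\theta)>0$ be a conditional density; loss $\ell(y,x,\theta)=-\ln p(y\mid x,\theta)$, expected loss $L(\theta)=\mathbb{E}_\nu[\ell(y,x,\theta)]$. A sample $D=\{(x_i,y_i)\}_{i=1}^n\sim\nu^n$ is i.i.d.; $p(D\mid\theta)=\prod_{i=1}^n p(y_i\mid x_i,\theta)$. The cumulant generating function is $J_\theta(\lambda)=\ln\mathbb{E}_\nu[e^{\lambda(L(\theta)-\ell(y,x,\theta))}]$ with derivative $J_\theta'$. For a prior $\pi$ and $\lambda>0$: - Jensen prior: $\pi_J^\lambda(\theta)=\pi(\theta)e^{-nJ_\theta(\lambda)}/\mathbb{E}_\pi[e^{-nJ_\theta(\lambda)}]$; - posterior: $\rho^\star_\lambda(\theta\mid D)=p(D\mid\theta)^\lambda\pi_J^\lambda(\theta)/\mathbb{E}_{\pi_J^\lambda}[p(D\mid\theta)^\lambda]$; - $R_\lambda(\pi)=\ln\mathbb{E}_\pi[e^{nJ_\theta(\lambda)}]$; - $\mathrm{EB}_0(\pi,\lambda)=\frac{1}{\lambda n}\mathbb{E}_{D\sim\nu^n}\big[-\ln\mathbb{E}_\pi[p(D\mid\theta)^\lambda]\big]+\frac{1}{\lambda n}R_\lambda(\pi)$; - for a distribution $\rho$ on $\Theta$: $\mathcal{B}(\rho,\lambda)=\mathbb{E}_\rho\big[\lambda J_\theta'(\lambda)-J_\theta(\lambda)\big]$. *)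

(* Defs.v *)
From HB Require Import structures.
From mathcomp Require Import all_boot all_order all_algebra.
From mathcomp Require Import all_classical all_reals all_analysis.
Set Implicit Arguments. Unset Strict Implicit. Unset Printing Implicit Defensive.
Import Order.TTheory GRing.Theory Num.Theory.
Local Open Scope ring_scope.
Local Open Scope classical_set_scope.

(* A sample of size n lives in  T * (T * (... * (T * unit)))  (n copies).    *)
Section iid_sample.
Context {d : measure_display} (T : measurableType d) (R : realType).

Fixpoint sampleT (n : nat) : {dd : measure_display & measurableType dd} :=
  match n with
  | 0 => existT (fun dd => measurableType dd) default_measure_display
                (unit : measurableType _)
  | k.+1 => existT (fun dd => measurableType dd) _
                ((T * projT2 (sampleT k))%type : measurableType _)
  end.

Definition sample (n : nat) := projT2 (sampleT n).

Fixpoint pow_prob (nu : probability T R) (n : nat) : probability (sample n) R :=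
  match n return probability (sample n) R with
  | 0 => [the probability _ _ of dirac tt]
  | k.+1 => [the probability _ _ of (nu \x^ pow_prob nu k)%E]
  end.

Fixpoint sample_prod (f : T -> R) (n : nat) : sample n -> R :=
  match n return sample n -> R with
  | 0 => fun _ => 1
  | k.+1 => fun D => f D.1 * sample_prod f D.2
  end.
End iid_sample.

(* Distributions on Theta other than the prior pi (Jensen prior, posterior)  *)
(* are represented by their density w.r.t. pi, exactly as they are defined.  *)
Section pac_bayes.
Context {dX dY dT : measure_display} (X : measurableType dX)
  (Y : measurableType dY) (Theta : measurableType dT) (R : realType).
Variables (nu : probability (X * Y)%type R) (pi : probability Theta R).
(* p y x th  =  p(y | x, theta) *)
Variable p : Y -> X -> Theta -> R.
Variable n : nat.

Definition loss (z : X * Y) (th : Theta) : R := - ln (p z.2 z.1 th).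

Definition Lexp (th : Theta) : \bar R := (\int[nu]_z (loss z th)%:E)%E.
Definition Lval (th : Theta) : R := fine (Lexp th).

Definition Jcgf (th : Theta) (l : R) : R :=
  ln (Rintegral nu setT (fun z => expR (l * (Lval th - loss z th)))).
Definition Jcgf' (th : Theta) (l : R) : R := derive1 (Jcgf th) l.

Definition lik (D : sample (X * Y)%type n) (th : Theta) : R :=
  sample_prod (fun z => p z.2 z.1 th) D.

Definition Epi (f : Theta -> R) : R := Rintegral pi setT f.

Definition Edens (g : Theta -> R) (f : Theta -> R) : R :=
  Epi (fun th => g th * f th).

Definition ED (F : sample (X * Y)%type n -> R) : R :=
  Rintegral (pow_prob nu n) setT F.

Definition jensen_dens (l : R) (th : Theta) : R :=
  expR (- (n%:R * Jcgf th l)) / Epi (fun th' => expR (- (n%:R * Jcgf th' l))).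

Definition Rlam (g : Theta -> R) (l : R) : R :=
  ln (Edens g (fun th => expR (n%:R * Jcgf th l))).

Definition EB0 (g : Theta -> R) (l : R) : R :=
  (l * n%:R)^-1 * ED (fun D => - ln (Edens g (fun th => lik D th `^ l)))
  + (l * n%:R)^-1 * Rlam g l.

Definition EBJ (l : R) : R := EB0 (jensen_dens l) l.

Definition post_dens (l : R) (D : sample (X * Y)%type n) (th : Theta) : R :=
  lik D th `^ l * jensen_dens l th
  / Edens (jensen_dens l) (fun th' => lik D th' `^ l).

Definition Bfun (g : Theta -> R) (l : R) : R :=
  Edens g (fun th => l * Jcgf' th l - Jcgf th l).

Definition KLdens (g : Theta -> R) : R := Edens g (fun th => ln (g th)).

End pac_bayes.

(* Main.v *)
Require Import Defs.
From HB Require Import structures.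
From mathcomp Require Import all_boot all_order all_algebra.
From mathcomp Require Import all_classical all_reals all_analysis.
From mathcomp Require Import ring lra measurable_realfun.
Import Order.TTheory GRing.Theory Num.Theory.
Import numFieldNormedType.Exports.
Local Open Scope ring_scope.
Local Open Scope classical_set_scope.

Lemma fermat_max (R : realType) (f : R -> R) (a b c : R) :
  a <= b -> derivable f c 1 -> c \in `]a, b[%R ->
  (forall t, t \in `]a, b[%R -> f t <= f c) -> is_derive c 1 f 0.
Proof.
move=> leab fdrvbl cab cmax; apply: DeriveDef; first exact: fdrvbl.
apply/eqP; rewrite eq_le; apply/andP; split.
  rewrite ['D_1 f c]cvg_at_rightE; last exact: fdrvbl.
  apply: limr_le.
    have dfc := fdrvbl.
    rewrite -(cvg_at_rightE (fun h : R => h^-1 *: ((f \o shift c) _ - f c))) //.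
    apply: cvg_trans dfc; apply: cvg_app.
    move=> A [e egt0 Ae]; exists e => // x xe xgt0; apply: Ae => //.
    exact/lt0r_neq0.
  near=> h; apply: mulr_ge0_le0.
    by rewrite invr_ge0; apply: ltW; near: h; exists 1 => /=.
  rewrite subr_le0 /=; apply: cmax; near: h.
  exists (b - c); first by rewrite /= subr_gt0 (itvP cab).
  move=> h /=; rewrite distrC subr0 in_itv /= => hb hp.
  have hA : (h%:A : R^o) = (h : R^o) by exact: mulr1.
  rewrite hA; move: cab; rewrite in_itv /= => /andP[? ?].
  move: hb => /ltr_normlP[_ ?]; apply/andP; split; lra.
rewrite ['D_1 f c]cvg_at_leftE; last exact: fdrvbl.
apply: limr_ge.
  have dfc := fdrvbl; rewrite -(cvg_at_leftE (fun h => h^-1 *: ((f \o shift c) _ - f c))) //.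
  apply: cvg_trans dfc; apply: cvg_app.
  move=> A [e egt0 Ae]; exists e => // x xe xgt0; apply: Ae => //.
  exact/ltr0_neq0.
near=> h; apply: mulr_le0.
  by rewrite invr_le0; apply: ltW; near: h; exists 1 => /=.
rewrite subr_le0 /=; apply: cmax; near: h.
exists (c - a); first by rewrite /= subr_gt0 (itvP cab).
move=> h /=; rewrite distrC subr0 in_itv /= => hb hp.
have hA : (h%:A : R^o) = (h : R^o) by exact: mulr1.
rewrite hA; move: cab; rewrite in_itv /= => /andP[? ?].
move: hb => /ltr_normlP[? _]; apply/andP; split; lra.
Unshelve. all: by end_near. Qed.

Lemma fermat_min_loc (R : realType) (f : R -> R) (c e : R) : 0 < e ->
  derivable f c 1 -> (forall t, `|t - c| < e -> f c <= f t) -> 'D_1 f c = 0.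
Proof.
move=> e0 df fmin.
have h : is_derive c 1 (fun x => - f x) 0.
  apply: (@fermat_max _ _ (c - e) (c + e)).
  - lra.
  - exact: derivableN.
  - by rewrite in_itv /=; apply/andP; split; lra.
  - move=> t; rewrite in_itv /= => /andP[t1 t2]; rewrite lerN2; apply: fmin.
    rewrite ltr_norml; apply/andP; split; lra.
have := @derive_val _ _ _ _ _ _ _ h; rewrite deriveN// => /eqP; rewrite oppr_eq0 => /eqP.
exact.
Qed.
Lemma RintZ d (T : measurableType d) (R : realType) (mu : {measure set T -> \bar R})
  (f : T -> R) (c : R) : measurable_fun setT f -> 0 <= c ->
  \int[mu]_(x in setT) (c * f x) = c * \int[mu]_(x in setT) f x.
Proof.
move=> mf c0.
have [->|cn0] := eqVneq c 0.
  rewrite mul0r; under eq_Rintegral do rewrite mul0r.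
  by rewrite Rintegral_cst// mul0r.
have cp : 0 < c by rewrite lt_neqAle eq_sym cn0 c0.
rewrite /Rintegral.
have mfE : measurable_fun setT (EFin \o f) by exact/measurable_EFinP.
have -> : (\int[mu]_(x in setT) (c * f x)%:E =
           c%:E * \int[mu]_(x in setT) (f x)%:E)%E.
  under eq_integral do rewrite EFinM.
  rewrite [in LHS]integralE ge0_funeposM// ge0_funenegM//=.
  rewrite (ge0_integralZl_EFin _ _ _ (measurable_funepos mfE) c0)//.
  rewrite (ge0_integralZl_EFin _ _ _ (measurable_funeneg mfE) c0)//.
  rewrite [in RHS]integralE.
  set a := (\int[mu]_(x in setT) _ )%E.
  set b := (\int[mu]_(x in setT) _ )%E.
  have a0 : (0 <= a)%E by apply: integral_ge0 => x _; exact: funepos_ge0.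
  have b0 : (0 <= b)%E by apply: integral_ge0 => x _; exact: funeneg_ge0.
  move: a b a0 b0 => [a| |] [b| |] //= a0 b0.
  - by rewrite -EFinM -EFinD -EFinD -EFinM; congr EFin; ring.
  - by rewrite gt0_muley ?lte_fin// /= addeNy gt0_muleNy ?lte_fin// addeNy.
  - by rewrite gt0_muley ?lte_fin// addye// addye.
  - by rewrite gt0_muley ?lte_fin// /= addeNy gt0_muleNy ?lte_fin.
case: (\int[mu]_(x in setT) _)%E => [r| |] /=; rewrite ?mulr0 //.
- by rewrite gt0_muley ?lte_fin.
- by rewrite gt0_muleNy ?lte_fin.
Qed.

Lemma Rint_gt0 d (T : measurableType d) (R : realType) (mu : probability T R)
  (f : T -> R) : (forall x, 0 < f x) -> mu.-integrable setT (EFin \o f) ->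
  0 < \int[mu]_(x in setT) f x.
Proof.
move=> fp intf.
have ge := @Rintegral_ge0 _ _ _ mu setT f (fun x _ => ltW (fp x)).
rewrite lt_neqAle ge andbT; apply/negP => /eqP h0.
have fin := integrable_fin_num measurableT intf.
have i0 : (\int[mu]_(x in setT) `|(EFin \o f) x| = 0)%E.
  rewrite (eq_integral (EFin \o f)); last first.
    by move=> x _ /=; rewrite ger0_norm // ltW.
  by rewrite -(fineK fin) -/(Rintegral _ _ _) -h0.
have mfE : measurable_fun setT (EFin \o f) by case/integrableP: intf.
have := (ae_eq_integral_abs mu measurableT mfE).1 i0.
case=> N [mN N0 sub].
have : (mu setT <= mu N)%E.
  apply: le_measure; rewrite ?inE //.
  move=> x _; apply: sub => /= /(_ I) /=; move=> [] /eqP; rewrite gt_eqF.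
  by [].
  exact: fp.
by rewrite N0 probability_setT lee_fin ler10.
Qed.
Lemma sp_gt0 d (T : measurableType d) (R : realType) (g : T -> R) k
  (D : sample T k) : (forall z, 0 < g z) -> 0 < sample_prod g D.
Proof.
move=> g0; elim: k D => [|k IH] D /=; first exact: ltr01.
by apply: mulr_gt0 => //; exact: IH.
Qed.

Lemma sp_meas dT (Th : measurableType dT) d (T : measurableType d) (R : realType)
  (G : T * Th -> R) : measurable_fun setT G -> forall k (D : sample T k),
  measurable_fun setT (fun th => sample_prod (fun z => G (z, th)) D).
Proof.
move=> mG; elim=> [|k IH] D /=; first exact: measurable_cst.
apply: measurable_funM; last exact: IH.
exact: measurable_fun_pair2.
Qed.

Lemma expneg_meas dT (Th : measurableType dT) (R : realType) (J : Th -> R) (c : R) :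
  measurable_fun setT J -> measurable_fun setT (fun th => expR (- (c * J th))).
Proof.
move=> mJ; apply: measurableT_comp; first exact: measurable_expR.
apply: measurable_funN; apply: measurable_funM => //; exact: measurable_cst.
Qed.
Lemma deriv_lnq (R : realType) (Z M : R -> R) x z' m' :
  0 < Z x -> 0 < M x -> is_derive x 1 Z z' -> is_derive x 1 M m' ->
  is_derive x 1 (fun l => - ln ((Z l)^-1 * M l)) (- (m' / M x - z' / Z x)).
Proof.
move=> Z0 M0 hZ hM.
have hZi : is_derive x 1 (fun l => (Z l)^-1) (- (Z x) ^- 2 *: z').
  by apply: is_deriveV => //; rewrite gt_eqF.
have hP : is_derive x 1 ((fun l => (Z l)^-1) * M)
   ((Z x)^-1 *: m' + M x *: (- (Z x) ^- 2 *: z')) := is_deriveM hZi hM.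
have pos : 0 < ((fun l => (Z l)^-1) * M) x.
  by rewrite /= mulr_gt0 // invr_gt0.
have hL := is_derive1_comp (is_derive1_ln pos) hP.
have hN := is_deriveN hL.
suff -> : - (m' / M x - z' / Z x) = (- ((((fun l : R => (Z l)^-1) * M) x)^-1 *
      ((Z x)^-1 *: m' + M x *: (- Z x ^- 2 *: z')))).
  exact hN.
rewrite /=; congr (- _).
have Zn : Z x != 0 by rewrite gt_eqF.
have Mn : M x != 0 by rewrite gt_eqF.
change (((fun l : R => (Z l)^-1) * M) x) with ((Z x)^-1 * M x).
have sE : forall a b : R, a *: b = a * b by [].
rewrite !sE; field; by apply/andP; split.
Qed.

Lemma is_derive_conv (R : realType) (f g : R -> R) (x d e : R) :
  is_derive x 1 f d -> f = g -> d = e -> is_derive x 1 g e.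
Proof. by move=> h <- <-. Qed.
Arguments is_derive_conv {R f g x d e}.

Lemma crit_EBJ (R : realType) (F Z : R -> R) (nn x F' Z' : R) :
  0 < x -> 0 < nn -> 0 < Z x -> is_derive x 1 F F' -> is_derive x 1 Z Z' ->
  'D_1 (fun l : R => (l * nn)^-1 * F l + (l * nn)^-1 * ln ((Z l)^-1)) x = 0 ->
  F x + ln ((Z x)^-1) = x * (F' - Z' / Z x).
Proof.
move=> x0 n0 Z0 hF hZ hD.
have hZi : is_derive x 1 (fun l => (Z l)^-1) (- (Z x) ^- 2 *: Z').
  by apply: is_deriveV => //; rewrite gt_eqF.
have pos : 0 < (Z x)^-1 by rewrite invr_gt0.
have hL := @is_derive1_comp _ (@ln R) (fun l => (Z l)^-1) x _ _ (is_derive1_ln pos) hZi.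
have hW := is_deriveD hF hL.
have hk0 : is_derive x 1 (fun l : R => l * nn) nn.
  apply: (is_derive_conv (is_deriveM (is_derive_id x 1) (is_derive_cst nn x 1))).
    by apply/funext => l.
  have sE : forall a b : R, a *: b = a * b by [].
  by rewrite /= !sE mulr0 mulr1 add0r.
have hk : is_derive x 1 (fun l => (l * nn)^-1) (- (x * nn) ^- 2 *: nn).
  by apply: is_deriveV => //; rewrite gt_eqF // mulr_gt0.
have hG := is_deriveM hk hW.
have EQ : ((fun l => (l * nn)^-1) * (F + (@ln R \o (fun l => (Z l)^-1)))) =
   (fun l : R => (l * nn)^-1 * F l + (l * nn)^-1 * ln ((Z l)^-1)).
  by apply: funext => l; rewrite /= mulrDr.
have hG2 := is_derive_conv hG EQ erefl.
rewrite (@derive_val _ _ _ _ _ _ _ hG2) /= in hD.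
move: hD; rewrite /GRing.scale /=.
have xn : x != 0 by rewrite gt_eqF.
have nn0 : nn != 0 by rewrite gt_eqF.
have Zn : Z x != 0 by rewrite gt_eqF.
set w := F x + ln (Z x)^-1.
move=> hD.
have : x * (F' - Z' / Z x) - w = (nn * x ^+ 2) * ((x * nn)^-1 * (F' + (Z x)^-1^-1 * (- (Z x) ^- 2 * Z')) +
    w * (- (x * nn) ^- 2 * nn)).
  rewrite /w; field; by apply/and3P; split.
by rewrite hD mulr0 => /eqP; rewrite subr_eq0 => /eqP ->.
Qed.

Section intR.
Context d (T : measurableType d) (R : realType) (mu : {measure set T -> \bar R}).
Implicit Types f g : T -> R.

Lemma intR_B f g : mu.-integrable setT (EFin \o f) -> mu.-integrable setT (EFin \o g) ->
  mu.-integrable setT (EFin \o (fun x => f x - g x)).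
Proof.
move=> hf hg; apply: (eq_integrable measurableT _ _ _ (integrableB measurableT hf hg)).
by move=> x _; rewrite /= EFinB.
Qed.

Lemma intR_D f g : mu.-integrable setT (EFin \o f) -> mu.-integrable setT (EFin \o g) ->
  mu.-integrable setT (EFin \o (fun x => f x + g x)).
Proof.
move=> hf hg; apply: (eq_integrable measurableT _ _ _ (integrableD measurableT hf hg)).
by move=> x _; rewrite /= EFinD.
Qed.

Lemma intR_Zl f (k : R) : mu.-integrable setT (EFin \o f) ->
  mu.-integrable setT (EFin \o (fun x => k * f x)).
Proof.
move=> hf; apply: (eq_integrable measurableT _ _ _ (integrableZl measurableT k hf)).
by move=> x _; rewrite /= EFinM.
Qed.

End intR.

Lemma intR_cst d (T : measurableType d) (R : realType) (mu : probability T R) (k : R) :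
  mu.-integrable setT (EFin \o (fun _ : T => k)).
Proof. exact: (finite_measure_integrable_cst mu k measurableT). Qed.
Arguments intR_B {d T R mu} f g.
Arguments intR_D {d T R mu} f g.
Arguments intR_Zl {d T R mu} f k.
Arguments intR_cst {d T R mu} k.
Arguments sp_meas {dT Th d T R G} mG k D.
Arguments expneg_meas {dT Th R J} c.
Theorem mainTheorem9
  (dX dY dT : measure_display) (X : measurableType dX) (Y : measurableType dY)
  (Theta : measurableType dT) (R : realType)
  (nu : probability (X * Y)%type R) (muY : {measure set Y -> \bar R})
  (pi : probability Theta R) (p : Y -> X -> Theta -> R) (n : nat) (lam : R) :
  (* standing assumptions: n >= 1 samples; p(y|x,theta) > 0 is a
     conditional density (w.r.t. a base measure muY on Y), jointly measurable *)
  (0 < n)%N ->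
  (forall y x th, 0 < p y x th) ->
  measurable_fun setT (fun zt : (X * Y) * Theta => p zt.1.2 zt.1.1 zt.2) ->
  (forall x th, (\int[muY]_y (p y x th)%:E = 1)%E) ->
  (* theta |-> J_theta(lambda) is measurable (needed for pi_J^lambda to be defined) *)
  (forall l, 0 < l -> measurable_fun setT (fun th => Jcgf nu p th l)) ->
  (* l >= 0 nu-a.e., L(theta) < oo *)
  (forall th, {ae nu, forall z, 0 <= loss p z th}) ->
  (forall th, (Lexp nu p th < +oo)%E) ->
  (* lam is a local (or global) minimizer on (0,oo) of lambda |-> EB_0(pi_J^lambda, lambda) *)
  0 < lam ->
  (exists2 e : R, 0 < e &
     forall l, 0 < l -> `|l - lam| < e -> EBJ nu pi p n lam <= EBJ nu pi p n l) ->
  (* ... at which it is differentiable *)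
  derivable (EBJ nu pi p n) lam 1 ->
  (* finiteness of all quantities involved (at lam) *)
  (forall th,
     nu.-integrable setT
       (fun z => (expR (lam * (Lval nu p th - loss p z th)))%:E) /\
     nu.-integrable setT
       (fun z => ((Lval nu p th - loss p z th)
                  * expR (lam * (Lval nu p th - loss p z th)))%:E)) ->
  pi.-integrable setT (fun th => (expR (- (n%:R * Jcgf nu p th lam)))%:E) ->
  pi.-integrable setT
    (fun th => (Jcgf' nu p th lam * expR (- (n%:R * Jcgf nu p th lam)))%:E) ->
  {ae pow_prob nu n, forall D : sample (X * Y)%type n,
     pi.-integrable setT
       (fun th => (lik p D th `^ lam * expR (- (n%:R * Jcgf nu p th lam)))%:E) /\
     pi.-integrable setT
       (fun th => ((ln (lik p D th) - n%:R * Jcgf' nu p th lam)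
                   * lik p D th `^ lam * expR (- (n%:R * Jcgf nu p th lam)))%:E) /\
     pi.-integrable setT
       (fun th => (post_dens nu pi p lam D th
                   * (lam * Jcgf' nu p th lam - Jcgf nu p th lam))%:E) /\
     pi.-integrable setT
       (fun th => (post_dens nu pi p lam D th
                   * ln (post_dens nu pi p lam D th))%:E)} ->
  (pow_prob nu n).-integrable setT
    (fun (D : sample (X * Y)%type n) => (Bfun nu pi p (post_dens nu pi p lam D) lam)%:E) ->
  (pow_prob nu n).-integrable setT
    (fun (D : sample (X * Y)%type n) => (KLdens pi (post_dens nu pi p lam D))%:E) ->
  (pow_prob nu n).-integrable setT
    (fun (D : sample (X * Y)%type n) => (- ln (Edens pi (jensen_dens nu pi p n lam)
                       (fun th => lik p D th `^ lam)))%:E) ->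
  (pow_prob nu n).-integrable setT
    (fun (D : sample (X * Y)%type n) => (derive1 (fun l => - ln (Edens pi (jensen_dens nu pi p n l)
                                         (fun th => lik p D th `^ l))) lam)%:E) ->
  (* the derivative may be computed by differentiating under E_nu ... *)
  (forall th,
     is_derive lam 1
       (fun l => Rintegral nu setT (fun z => expR (l * (Lval nu p th - loss p z th))))
       (Rintegral nu setT (fun z => (Lval nu p th - loss p z th)
                             * expR (lam * (Lval nu p th - loss p z th))))) ->
  (* ... under E_pi ... *)
  is_derive lam 1
    (fun l => Epi pi (fun th => expR (- (n%:R * Jcgf nu p th l))))
    (Epi pi (fun th => - (n%:R * Jcgf' nu p th lam)
                       * expR (- (n%:R * Jcgf nu p th lam)))) ->
  {ae pow_prob nu n, forall D : sample (X * Y)%type n,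
     is_derive lam 1
       (fun l => Epi pi (fun th => lik p D th `^ l * expR (- (n%:R * Jcgf nu p th l))))
       (Epi pi (fun th => (ln (lik p D th) - n%:R * Jcgf' nu p th lam)
                          * lik p D th `^ lam * expR (- (n%:R * Jcgf nu p th lam))))} ->
  (* ... and under E_{D ~ nu^n} *)
  is_derive lam 1
    (fun l => ED nu (fun (D : sample (X * Y)%type n) => - ln (Edens pi (jensen_dens nu pi p n l)
                                      (fun th => lik p D th `^ l))))
    (ED nu (fun (D : sample (X * Y)%type n) => derive1 (fun l => - ln (Edens pi (jensen_dens nu pi p n l)
                                                  (fun th => lik p D th `^ l))) lam)) ->
  (* conclusion, with rho* = rho*_lam given by its density w.r.t. pi *)
  ED nu (fun (D : sample (X * Y)%type n) => Bfun nu pi p (post_dens nu pi p lam D) lam)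
  = n%:R^-1 * ED nu (fun (D : sample (X * Y)%type n) => KLdens pi (post_dens nu pi p lam D)).
Proof.
move=> n0 p0 mp _ mJ _ _ lam0 [e e0 hmin] dEB Iexp IZ IZ' Iae IB IKL Iu Iv _ dZ dMae dF.
pose Zf := fun l => Epi pi (fun th => expR (- (n%:R * Jcgf nu p th l))).
pose Zp := Epi pi (fun th => - (n%:R * Jcgf' nu p th lam) * expR (- (n%:R * Jcgf nu p th lam))).
pose Ff := fun l => ED nu (fun D : sample (X * Y)%type n => - ln (Edens pi (jensen_dens nu pi p n l)
                                      (fun th => lik p D th `^ l))).
pose u := fun D : sample (X * Y)%type n => - ln (Edens pi (jensen_dens nu pi p n lam)
                                      (fun th => lik p D th `^ lam)).
pose v := fun D : sample (X * Y)%type n => derive1 (fun l => - ln (Edens pi (jensen_dens nu pi p n l)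
                                         (fun th => lik p D th `^ l))) lam.
have nR0 : (0 < n%:R :> R) by rewrite ltr0n.
have Zpos : 0 < Zf lam.
  by apply: Rint_gt0 => // th; exact: expR_gt0.
have EBJE : forall l, EBJ nu pi p n l =
    (l * n%:R)^-1 * Ff l + (l * n%:R)^-1 * ln ((Zf l)^-1).
  move=> l; rewrite /EBJ /EB0; congr (_ + _); congr (_ * _).
  rewrite /Rlam /Edens /jensen_dens; congr ln.
  transitivity (Epi pi (fun _ => (Zf l)^-1)).
    apply: eq_Rintegral => th _.
    by rewrite expRN mulrAC mulVf ?gt_eqF ?expR_gt0 // mul1r.
  have h1 : fine (pi [set: Theta]) = 1 by rewrite probability_setT.
  by rewrite /Epi Rintegral_cst // h1 mulr1.
have dEBJ : 'D_1 (fun l : R => (l * n%:R)^-1 * Ff l + (l * n%:R)^-1 * ln ((Zf l)^-1)) lam = 0.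
  have h : 'D_1 (EBJ nu pi p n) lam = 0.
    have em : 0 < Num.min e lam by rewrite lt_min e0 lam0.
    apply: (@fermat_min_loc R _ lam (Num.min e lam) em dEB).
    move=> t; rewrite lt_min => /andP[h1 h2]; apply: hmin; last exact: h1.
    move: h2 => /ltr_normlP[h3 h4].
    by move: h3; rewrite opprB ltrBlDr ltrDl.
  have E : EBJ nu pi p n = (fun l : R => (l * n%:R)^-1 * Ff l + (l * n%:R)^-1 * ln ((Zf l)^-1)).
    by apply/funext => l; exact: EBJE.
  by rewrite -E.
have crit := @crit_EBJ R Ff Zf n%:R lam _ _ lam0 nR0 Zpos dF dZ dEBJ.
pose B := fun D : sample (X * Y)%type n => Bfun nu pi p (post_dens nu pi p lam D) lam.
pose KL := fun D : sample (X * Y)%type n => KLdens pi (post_dens nu pi p lam D).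
pose K := ln (Zf lam) - lam * (Zp / Zf lam).
have key : {ae pow_prob nu n, forall D : sample (X * Y)%type n, setT D ->
   n%:R * B D - KL D = lam * v D - u D + K}.
  apply: (filterS2 _ _ Iae dMae) => D [I1 [I2 [I3 I4]]] dM _.
  pose Mf := fun l => Epi pi (fun th => lik p D th `^ l * expR (- (n%:R * Jcgf nu p th l))).
  pose Mv := Mf lam.
  pose G := Epi pi (fun th => (ln (lik p D th) - n%:R * Jcgf' nu p th lam)
                          * lik p D th `^ lam * expR (- (n%:R * Jcgf nu p th lam))).
  have likp : forall th, 0 < lik p D th.
    by move=> th; apply: sp_gt0 => z; exact: p0.
  have Lp : forall th, 0 < lik p D th `^ lam by move=> th; exact: powR_gt0.
  have Mpos : 0 < Mv.
    by apply: Rint_gt0 I1 => th; apply: mulr_gt0 => //; exact: expR_gt0.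
  have Zn : Zf lam != 0 by rewrite gt_eqF.
  have Mn : Mv != 0 by rewrite gt_eqF.
  have jdE : forall l th, jensen_dens nu pi p n l th =
      expR (- (n%:R * Jcgf nu p th l)) / Zf l by [].
  have Ed : forall l, 0 < l -> Edens pi (jensen_dens nu pi p n l) (fun th => lik p D th `^ l)
       = (Zf l)^-1 * Mf l.
    move=> l l0; rewrite /Edens /Mf /Epi -RintZ.
    - by apply: eq_Rintegral => th _; rewrite jdE; ring.
    - apply: measurable_funM; last exact: expneg_meas n%:R (mJ l l0).
      exact: measurableT_comp (measurable_powR _) (sp_meas mp n D).
    - by rewrite invr_ge0; apply: Rintegral_ge0 => th _; exact: ltW (expR_gt0 _).
  have postE : post_dens nu pi p lam D = (fun th => Mv^-1 *
      (lik p D th `^ lam * expR (- (n%:R * Jcgf nu p th lam)))).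
    apply/funext => th; rewrite /post_dens (Ed lam lam0) jdE -/Mv.
    by field; apply/andP; split.
  have lnP : forall th, ln (Mv^-1 * (lik p D th `^ lam * expR (- (n%:R * Jcgf nu p th lam))))
      = - ln Mv + (lam * ln (lik p D th) - n%:R * Jcgf nu p th lam).
    move=> th; rewrite lnM ?posrE ?invr_gt0 ?mulr_gt0 ?expR_gt0 //.
    by rewrite lnV ?posrE // lnM ?posrE ?expR_gt0 // ln_powR expRK.
  have uE : u D = ln (Zf lam) - ln Mv.
    rewrite /u (Ed lam lam0) -/Mv lnM ?posrE ?invr_gt0 // lnV ?posrE //.
    by rewrite opprD opprK.
  have vE : v D = - (G / Mv - Zp / Zf lam).
    have pn : \forall l \near lam, 0 < l.
      apply/nbhs_ballP; exists lam => // l; rewrite /ball /= => /ltr_normlP[_ h].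
      by move: h; rewrite ltrBlDr ltrDl.
    have hd := @deriv_lnq R Zf Mf lam _ _ Zpos Mpos dZ dM.
    have hd2 : is_derive lam 1 (fun l => - ln (Edens pi (jensen_dens nu pi p n l)
                                         (fun th => lik p D th `^ l))) (- (G / Mv - Zp / Zf lam)).
      apply: (near_eq_is_derive _ hd); apply: filterS pn => l l0 /=.
      by rewrite Ed.
    by rewrite /v derive1E (@derive_val _ _ _ _ _ _ _ hd2).
  rewrite vE uE /K /B /KL /Bfun /KLdens /Edens postE.
  rewrite postE in I3 I4.
  rewrite /Epi -RintegralZl //.
  transitivity (\int[pi]_(th in setT) (n%:R * ((Mv^-1 * (lik p D th `^ lam * expR (- (n%:R * Jcgf nu p th lam)))) * (lam * Jcgf' nu p th lam - Jcgf nu p th lam)) - (Mv^-1 * (lik p D th `^ lam * expR (- (n%:R * Jcgf nu p th lam)))) * ln (Mv^-1 * (lik p D th `^ lam * expR (- (n%:R * Jcgf nu p th lam)))))).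
    rewrite RintegralB //.
    by apply: intR_Zl; exact: I3.
  under eq_Rintegral do rewrite lnP.
  transitivity (\int[pi]_(th in setT)
    ((- lam * Mv^-1) * ((ln (lik p D th) - n%:R * Jcgf' nu p th lam)
                          * lik p D th `^ lam * expR (- (n%:R * Jcgf nu p th lam)))
     + (ln Mv * Mv^-1) * (lik p D th `^ lam * expR (- (n%:R * Jcgf nu p th lam))))).
    by apply: eq_Rintegral => th _; ring.
  rewrite RintegralD //; last 2 first.
  - by apply: intR_Zl; exact I2.
  - by apply: intR_Zl; exact I1.
  rewrite RintegralZl //; try exact I2.
  rewrite RintegralZl //; try exact I1.
  transitivity (- lam / Mv * G + ln Mv / Mv * Mv); first reflexivity.
  by field; apply/andP; split.
have IL : (pow_prob nu n).-integrable setT (EFin \o (fun D => n%:R * B D - KL D)).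
  exact: intR_B _ KL (intR_Zl B n%:R IB) IKL.
have IR : (pow_prob nu n).-integrable setT (EFin \o (fun D => lam * v D - u D + K)).
  exact: intR_D _ (fun _ => K) (intR_B _ u (intR_Zl v lam Iv) Iu) (intR_cst K).
have E1 : ED nu (fun D => n%:R * B D - KL D) = ED nu (fun D => lam * v D - u D + K).
  rewrite /ED /Rintegral; congr fine.
  apply: ae_eq_integral => //; [exact: measurable_int IL|exact: measurable_int IR|].
  by apply: filterS key => D h HD; rewrite /= h.
have IB' := intR_Zl B n%:R IB.
have Iv' := intR_Zl v lam Iv.
have Ivu := intR_B _ u Iv' Iu.
have IK : (pow_prob nu n).-integrable setT (EFin \o (fun _ => K)) := intR_cst K.
rewrite /ED RintegralB // RintegralZl // in E1.
rewrite RintegralD // RintegralB // RintegralZl // Rintegral_cst // in E1.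
have h1 : fine (pow_prob nu n [set: sample (X * Y)%type n]) = 1 by rewrite probability_setT.
rewrite h1 mulr1 in E1.
rewrite lnV ?posrE // in crit.
have e1 : n%:R * ED nu B - ED nu KL = lam * ED nu v - ED nu u + K := E1.
have c3 : ED nu u - ln (Zf lam) = lam * (ED nu v - Zp / Zf lam) := crit.
change (ED nu B = n%:R^-1 * ED nu KL).
have hh : n%:R * ED nu B = ED nu KL.
  rewrite /K in e1.
  have : n%:R * ED nu B - ED nu KL = 0.
    have c4 : ED nu u = lam * (ED nu v - Zp / Zf lam) + ln (Zf lam) by rewrite -c3 subrK.
    by rewrite e1 c4; ring.
  by move/eqP; rewrite subr_eq0 => /eqP.
by rewrite -hh mulrA mulVf ?mul1r // gt_eqF.
Qed.
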